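(* Let $\mathbf{O}\,\dot\cup\,\mathbf{S}$ be a finite set of categorical variables, $\hat{\mathbf{s}}$ a fixed value of $\mathbf{S}$, and $\mathcal{G}$ a DAG over $\mathbf{O}\cup\mathbf{S}$ in which no node of $\mathbf{S}$ has a child. Let $\mathbf{X}=\mathrm{an}_{\mathcal{G}}(\mathbf{S})$ (so $\mathbf{S}\subseteq\mathbf{X}$), $\mathbf{Y}=\mathbf{O}\setminus\mathbf{X}$, $\mathcal{G}_1=\mathcal{G}_{\mathbf{X}}$ (induced subgraph on $\mathbf{X}$), and $\mathcal{G}_2=\phi_{\mathbf{X}\setminus\mathbf{S}}(\mathcal{G}_{\mathbf{O}})$. Let $P$ be a distribution over $\mathbf{O}$ with $p(\mathbf{x}\setminus\mathbf{s})>0$ for every value $\mathbf{x}\setminus\mathbf{s}$ of $\mathbf{X}\setminus\mathbf{S}$, let $P_1$ be the marginal of $P$ over $\mathbf{X}\setminus\mathbf{S}$, and $P_2$ the conditional distribution of $\mathbf{Y}$ given $\mathbf{X}\setminus\mathbf{S}$ under $P$. Then $$P\in\mathbf{BN}(\mathcal{G})[^{\mathbf{S}=\hat{\mathbf{s}}}\iff P_1\in\mathbf{BN}(\mathcal{G}_1)[^{\mathbf{S}=\hat{\mathbf{s}}}\ \text{ and }\ P_2\in\mathbf{BN}(\mathcal{G}_2).$$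
   Context: $\mathrm{an}_{\mathcal{G}}(\mathbf{S})$ is the set of nodes that are equal to or have a directed path to some node of $\mathbf{S}$. A conditional DAG is a DAG over $\mathbf{X}'\,\dot\cup\,\mathbf{Y}'$ in which all nodes of $\mathbf{Y}'$ (fixed nodes) have no parents; nodes of $\mathbf{X}'$ are random nodes. Fixing: for a DAG $\mathcal{H}$ over $\mathbf{V}$ and $\mathbf{A}\subseteq\mathbf{V}$, $\phi_{\mathbf{A}}(\mathcal{H})$ is the conditional DAG with random nodes $\mathbf{V}\setminus\mathbf{A}$, fixed nodes $\mathbf{A}$, the edges of $\mathcal{H}$ between nodes of $\mathbf{V}\setminus\mathbf{A}$, and the edges of $\mathcal{H}$ from nodes of $\mathbf{A}$ into nodes of $\mathbf{V}\setminus\mathbf{A}$. For a (conditional) DAG $\mathcal{H}$ with random nodes $\mathbf{X}'$ and fixed nodes $\mathbf{Y}'$, $\mathbf{BN}(\mathcal{H})$ is the set of conditional distributions of $\mathbf{X}'$ given $\mathbf{Y}'$ such that each random node is conditionally independent of the random nodes that are neither its descendants nor parents, given its parents (equivalently $p(\mathbf{x}'\mid\mathbf{y}')=\prod_{X\in\mathbf{X}'}p(x\mid\mathrm{pa}_{\mathcal{H}}(X))$); for an ordinary DAG, $\mathbf{Y}'=\emptyset$. For a model $\mathbf{M}$ over $\mathbf{A}\cup\mathbf{S}$, $\mathbf{M}[^{\mathbf{S}=\hat{\mathbf{s}}}$ is the set of distributions $Q$ over $\mathbf{A}$ such that there is $P\in\mathbf{M}$ with $p(\hat{\mathbf{s}})>0$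 and $q(\mathbf{a})=p(\mathbf{a}\mid\hat{\mathbf{s}})$. *)

(* Defs.v *)
From HB Require Import structures.
From mathcomp Require Import all_boot all_order all_algebra.
Set Implicit Arguments. Unset Strict Implicit. Unset Printing Implicit Defensive.
Import Order.TTheory GRing.Theory Num.Theory.
Local Open Scope ring_scope.

Section Defs.
Variables (V : finType) (D : V -> finType) (R : realFieldType).

(* A partial assignment: each variable v gets either a value in D v or None.
   An assignment of a set of variables A is a partial assignment whose
   domain is exactly A. *)
Definition pasg := {dffun forall v : V, option (D v)}.

Definition dom (x : pasg) : {set V} := [set v | x v != None].

Definition restr (A : {set V}) (x : pasg) : pasg :=
  @finfun V (fun v => option (D v)) (fun v => if v \in A then x v else None).

(* union of two assignments (left-biased; used for disjoint domains) *)
Definition merge (x y : pasg) : pasg :=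
  @finfun V (fun v => option (D v))
    (fun v => if x v is Some a then Some a else y v).

Definition is_dist (A : {set V}) (p : pasg -> R) : Prop :=
  [/\ forall x, 0 <= p x,
      forall x, dom x != A -> p x = 0
    & \sum_x p x = 1].

Definition marg (A : {set V}) (p : pasg -> R) (a : pasg) : R :=
  \sum_(x | restr A x == a) p x.

(* conditional distribution of (B minus A) given A under p *)
Definition condd (B A : {set V}) (p : pasg -> R) (z : pasg) : R :=
  if dom z == B then p z / marg A p (restr A z) else 0.

Record cdag := CDag { rnodes : {set V}; fnodes : {set V}; cedge : rel V }.

Definition acyclic (E : rel V) : Prop := forall u v, E u v -> ~~ connect E v u.

(* ancestors (including the nodes themselves) *)
Definition an (E : rel V) (A : {set V}) : {set V} :=
  [set v | [exists u in A, connect E v u]].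

Definition pa (H : cdag) (v : V) : {set V} := [set u | cedge H u v].

Definition dag_on (N : {set V}) (E : rel V) : cdag := CDag N set0 E.

Definition induced (W : {set V}) (E : rel V) : cdag :=
  CDag W set0 [rel u v | [&& E u v, u \in W & v \in W]].

Definition fixing (A : {set V}) (H : cdag) : cdag :=
  CDag (rnodes H :\: A) A
       [rel u v | [&& cedge H u v, u \in rnodes H & v \in rnodes H :\: A]].

(* BN(H): conditional distributions q of the random nodes given the fixed
   nodes (q is a function on assignments of rnodes :|: fnodes, zero elsewhere)
   factorizing as a product of conditional probability tables, one per random
   node, given its parents. *)
Definition BN (H : cdag) (q : pasg -> R) : Prop :=
  exists k : V -> pasg -> R,
  [/\ forall v x, 0 <= k v x,
      forall v z, dom z = pa H v ->
        \sum_(x | dom x == [set v]) k v (merge x z) = 1,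
      forall z, dom z != rnodes H :|: fnodes H -> q z = 0
    & forall z, dom z = rnodes H :|: fnodes H ->
        q z = \prod_(v in rnodes H) k v (restr (v |: pa H v) z)].

(* M[^{S = s}: distributions Q over A obtained by conditioning some P in M
   (a model over A :|: S) on S = s, with p(s) > 0 *)
Definition condition (M : (pasg -> R) -> Prop) (A S : {set V}) (s : pasg)
    (Q : pasg -> R) : Prop :=
  exists P, [/\ M P, 0 < marg S P s &
    forall a, Q a = if dom a == A then P (merge a s) / marg S P s else 0].

End Defs.

(* Main.v *)
Require Import Defs.
From HB Require Import structures.
From mathcomp Require Import all_boot all_order all_algebra.
From mathcomp Require Import ring.
Import Order.TTheory GRing.Theory Num.Theory.
Local Open Scope ring_scope.
Set Implicit Arguments. Unset Strict Implicit. Unset Printing Implicit Defensive.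
Local Notation mrg := Defs.merge.

Section Aux.
Variables (V : finType) (D : V -> finType) (R : realFieldType).
Local Notation T := (pasg D).
Implicit Types (A B C W : {set V}).

Lemma domE (x : T) v : (v \in dom x) = (x v != None).
Proof. by rewrite /dom inE. Qed.

Lemma restrE A (x : T) v : restr A x v = if v \in A then x v else None.
Proof. by rewrite /restr ffunE. Qed.

Lemma mergeE (x y : T) v : mrg x y v = if x v is Some a then Some a else y v.
Proof. by rewrite /mrg ffunE. Qed.

Lemma notdomE (x : T) v : v \notin dom x -> x v = None.
Proof. by rewrite domE negbK => /eqP. Qed.

Lemma dom_restr A (x : T) : dom (restr A x) = A :&: dom x.
Proof. by apply/setP => v; rewrite !inE restrE; case: (v \in A). Qed.

Lemma dom_merge (x y : T) : dom (mrg x y) = dom x :|: dom y.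
Proof. by apply/setP => v; rewrite !inE mergeE; case: (x v). Qed.

Lemma merge_comm (x y : T) : [disjoint dom x & dom y] -> mrg x y = mrg y x.
Proof.
move=> dj; apply/ffunP => v; rewrite !mergeE.
case ex: (x v) => [a|]; case ey: (y v) => [b|] //.
have h1 : v \in dom x by rewrite domE ex.
have h2 : v \in dom y by rewrite domE ey.
by move: (disjointFr dj h1); rewrite h2.
Qed.

Lemma merge_assoc (x y z : T) : mrg (mrg x y) z = mrg x (mrg y z).
Proof. by apply/ffunP => v; rewrite !mergeE; case: (x v). Qed.

Lemma restr_merge_l A (x y : T) : dom x = A -> restr A (mrg x y) = x.
Proof.
move=> <-; apply/ffunP => v; rewrite restrE mergeE domE.
by case: (x v).
Qed.

Lemma restr_merge_r A (x y : T) : dom y = A -> [disjoint dom x & A] ->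
  restr A (mrg x y) = y.
Proof.
move=> hy dj; apply/ffunP => v; rewrite restrE mergeE.
case: ifP => hv.
  by rewrite notdomE // (disjointFl dj hv).
by rewrite notdomE // hy hv.
Qed.

Lemma restr_id A (x : T) : dom x \subset A -> restr A x = x.
Proof.
move=> sub; apply/ffunP => v; rewrite restrE; case: ifP => // hv.
by rewrite notdomE //; apply/negP => /(subsetP sub); rewrite hv.
Qed.

Lemma restr_restr A B (x : T) : A \subset B -> restr A (restr B x) = restr A x.
Proof.
move=> sub; apply/ffunP => v; rewrite !restrE; case: ifP => // hv.
by rewrite (subsetP sub _ hv).
Qed.

Lemma merge_restr A B (x : T) : dom x = A :|: B -> mrg (restr A x) (restr B x) = x.
Proof.
move=> hx; apply/ffunP => v; rewrite mergeE !restrE.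
case hA: (v \in A).
  have : v \in dom x by rewrite hx inE hA.
  by rewrite domE; case: (x v).
case: ifP => // hB; rewrite notdomE // hx !inE hA hB //.
Qed.

Lemma dom0_eq (x y : T) : dom x = set0 -> dom y = set0 -> x = y.
Proof.
move=> hx hy; apply/ffunP => v.
by rewrite !notdomE // ?hx ?hy inE.
Qed.

Lemma sum_split (A B : {set V}) (f : T -> R) : [disjoint A & B] ->
  \sum_(x | dom x == A :|: B) f x =
  \sum_(a | dom a == A) \sum_(b | dom b == B) f (mrg a b).
Proof.
move=> dj.
rewrite pair_big_dep /=.
rewrite (reindex_onto (fun p : T * T => mrg p.1 p.2)
          (fun x => (restr A x, restr B x))) /=; last first.
  by move=> x /eqP hx; rewrite merge_restr.
apply: eq_bigl => [[a b]] /=.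
apply/idP/idP.
  case/andP => /eqP hd /eqP [ha hb].
  apply/andP; split; apply/eqP; [rewrite -ha | rewrite -hb];
    rewrite dom_restr hd; apply/setIidPl; [exact: subsetUl | exact: subsetUr].
case/andP => /eqP ha /eqP hb.
rewrite dom_merge ha hb eqxx /= restr_merge_l // restr_merge_r //.
by rewrite ha.
Qed.

Lemma disjDr A B : [disjoint A & B :\: A].
Proof.
rewrite -setI_eq0; apply/eqP/setP => x; rewrite !inE.
by case: (x \in A); rewrite ?andbF.
Qed.

Lemma marg_split A B (p : T -> R) (a : T) : dom a = A -> A \subset B ->
  (forall x, dom x != B -> p x = 0) ->
  marg A p a = \sum_(y | dom y == B :\: A) p (mrg a y).
Proof.
move=> ha sub hp.
rewrite /marg big_mkcond /=.
rewrite (eq_bigr (fun x => if dom x == B then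
     (if restr A x == a then p x else 0) else 0)); last first.
  move=> x _; case: (eqVneq (dom x) B) => [//|hx] /=; case: ifP => // _; exact: hp.
have eB : A :|: B :\: A = B by rewrite -{2}(setID B A) (setIidPr sub).
rewrite -big_mkcond /= -{1}eB sum_split; last exact: disjDr.
rewrite (bigD1 a) /=; last by rewrite ha.
rewrite [X in _ + X]big1 ?addr0.
  by apply: eq_bigr => y _; rewrite restr_merge_l // eqxx.
move=> a' /andP [/eqP ha' ne]; apply: big1 => y _.
by rewrite restr_merge_l // (negbTE ne).
Qed.

Lemma marg_off A B (p : T -> R) (a : T) : A \subset B ->
  (forall x, dom x != B -> p x = 0) -> dom a != A -> marg A p a = 0.
Proof.
move=> sub hp ha; apply: big1 => x /eqP hx.
case: (eqVneq (dom x) B) => [hB|]; last exact: hp.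
by move: ha; rewrite -hx dom_restr hB (setIidPl sub) eqxx.
Qed.

Lemma sink_exists (E' : rel V) W : (forall u v, E' u v -> ~~ connect E' v u) ->
  W != set0 -> exists2 v, v \in W & forall u, u \in W -> ~~ E' v u.
Proof.
move=> acyc /set0Pn [v0 hv0].
case: (arg_maxnP (fun v => #|[set w | connect E' w v]|) hv0) => v hv hmax.
exists v => // u hu; apply/negP => e.
have := hmax u hu.
have : [set w | connect E' w v] \proper [set w | connect E' w u].
  apply/properP; split.
    apply/subsetP => w; rewrite !inE => c; exact: connect_trans c (connect1 e).
  by exists u; rewrite !inE ?connect0 //; exact: acyc.
by move/proper_card => lt le; move: (leq_ltn_trans le lt); rewrite ltnn.
Qed.

Lemma sum_prod_cpt (E' : rel V) (k : V -> T -> R) :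
  (forall u v, E' u v -> ~~ connect E' v u) ->
  (forall v z, dom z = [set u | E' u v] ->
      \sum_(x | dom x == [set v]) k v (mrg x z) = 1) ->
  forall n W C (z : T), #|W| = n -> dom z = C -> [disjoint W & C] ->
  (forall v u, v \in W -> E' u v -> u \in W :|: C) ->
  \sum_(w | dom w == W) \prod_(v in W)
      k v (restr (v |: [set u | E' u v]) (mrg w z)) = 1.
Proof.
move=> acyc norm; elim=> [|n IH] W C z hn hz dj hpa.
  have W0 : W = set0 by apply/eqP; rewrite -cards_eq0 hn.
  subst W.
  rewrite (bigD1 (restr set0 z)) /=; last by rewrite dom_restr set0I.
  rewrite [X in _ + X]big1 ?addr0; first by rewrite big_set0.
  move=> w /andP [/eqP hw].
  by rewrite (@dom0_eq w (restr set0 z)) ?eqxx // dom_restr set0I.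
have Wn0 : W != set0 by rewrite -card_gt0 hn.
have [v hv sink] := sink_exists acyc Wn0.
have nself : forall u, ~~ E' u u.
  by move=> u; apply/negP => /acyc; rewrite connect0.
have eW : W = (W :\ v) :|: [set v] by rewrite setUC setD1K.
have dj1 : [disjoint W :\ v & [set v]].
  by rewrite disjoint_sym disjoints1 !inE eqxx.
rewrite {1}eW sum_split //.
rewrite -[RHS](IH (W :\ v) C z) //; first last.
- move=> u w; rewrite !inE => /andP [uv uW] e.
  have := hpa _ _ uW e; rewrite !inE => /orP [wW|->]; last by rewrite orbT.
  rewrite wW andbT; apply/orP; left.
  apply/negP => /eqP wv; subst w; by move: (sink _ uW); rewrite e.
- by apply: disjointWl dj; apply: subsetDl.
- by move: hn; rewrite (cardsD1 v) hv add1n => [[]].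
apply: eq_bigr => w' /eqP hw'.
have w'v : w' v = None by rewrite notdomE // hw' !inE eqxx.
transitivity (\sum_(x | dom x == [set v])
   k v (mrg x (restr [set u | E' u v] (mrg w' z))) *
   \prod_(u in W :\ v) k u (restr (u |: [set u0 | E' u0 u]) (mrg w' z))).
  apply: eq_bigr => x /eqP hx; rewrite (big_setD1 _ hv); congr (_ * _).
    congr (k v _); apply/ffunP => a; rewrite !restrE !mergeE !restrE !inE.
    case: (eqVneq a v) => [->|ne] /=.
      have : v \in dom x by rewrite hx inE.
      by rewrite domE w'v; case: (x v).
    have -> : x a = None by rewrite notdomE // hx inE.
    by rewrite mergeE; case: (E' a v) => //; case: (w' a).
  apply: eq_bigr => u hu; congr (k u _); apply/ffunP => a.
  rewrite !restrE !mergeE !inE.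
  case: ifP => // ha.
  have -> : x a = None.
    rewrite notdomE // hx inE; apply/negP => /eqP av; subst a.
    move: hu ha; rewrite !inE => /andP [uv uW] /orP [/eqP vu|e].
      by rewrite vu eqxx in uv.
    by move: (sink _ uW); rewrite e.
  by case: (w' a).
rewrite -big_distrl /= norm ?mul1r //.
rewrite dom_restr dom_merge hw' hz; apply/setIidPl/subsetP => u; rewrite inE => e.
have := hpa _ _ hv e; rewrite !inE => /orP [uW|->]; last by rewrite orbT.
rewrite uW andbT; apply/orP; left; apply/negP => /eqP uv; subst u.
by move: (nself v); rewrite e.
Qed.


Lemma restr_merge_disjR A (x y : T) : [disjoint A & dom y] ->
  restr A (mrg x y) = restr A x.
Proof.
move=> dj; apply/ffunP => v; rewrite !restrE mergeE; case: ifP => // hv.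
by rewrite (@notdomE y v) ?(disjointFr dj hv) //; case: (x v).
Qed.

End Aux.

Unset Implicit Arguments.

Ltac sstac X S hY hN hOS hXS :=
  let v := fresh "v" in let hv := fresh "hv" in
  first [apply/setP => v | rewrite -setI_eq0; apply/eqP/setP => v];
  rewrite ?(hY, hN, in_setI, in_setU, in_setD, in_setT, in_set0, hOS, in_set1);
  case: (boolP (v \in S)) => hv; [rewrite ?(hXS _ hv) ?hv | ];
  case: (v \in X); rewrite /= ?andbF ?andbT ?orbF ?orbT //.

Theorem theorem1 (V : finType) (D : V -> finType) (R : realFieldType)
  (O S : {set V}) (hdisj : [disjoint O & S]) (hcov : O :|: S = setT)
  (s : pasg D) (hs : dom s = S)
  (E : rel V) (hdag : acyclic E) (hS : forall u v, u \in S -> ~~ E u v)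
  (P : pasg D -> R) (hP : is_dist O P)
  (hpos : forall a : pasg D, dom a = an E S :\: S ->
            0 < marg (an E S :\: S) P a) :
  let X := an E S in
  let Y := O :\: X in
  let G := dag_on setT E in
  let G1 := induced X E in
  let G2 := fixing (X :\: S) (induced O E) in
  let P1 := marg (X :\: S) P in
  let P2 := condd (Y :|: (X :\: S)) (X :\: S) P in
  condition (BN G) O S s P <->
  (condition (BN G1) (X :\: S) S s P1 /\ BN G2 P2).
Proof.
move=> X Y G G1 G2 P1 P2.
pose N := X :\: S.
have hOS : forall v, (v \in O) = (v \notin S).
  move=> v; move/setP/(_ v): hcov; rewrite !inE.
  case hO: (v \in O) => /= hv; last by rewrite hv.
  by rewrite (disjointFr hdisj hO).
have hSX : S \subset X.
  by apply/subsetP => v hv; rewrite inE; apply/existsP; exists v; rewrite hv connect0.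
have hXpa : forall u v, v \in X -> E u v -> u \in X.
  move=> u v; rewrite !inE => /existsP [w /andP [hw c]] e.
  by apply/existsP; exists w; rewrite hw /=; exact: connect_trans (connect1 e) c.
have hSpa : forall u v, E u v -> u \notin S.
  by move=> u v e; apply/negP => us; move: (hS _ v us); rewrite e.
have hY : forall v, (v \in Y) = (v \notin X).
  move=> v; rewrite /Y in_setD hOS; case hX: (v \in X) => //=.
  by apply/negP => hs'; rewrite (subsetP hSX _ hs') in hX.
have hN : forall v, (v \in N) = (v \in X) && (v \notin S).
  by move=> v; rewrite /N in_setD andbC.
have hXS : forall v, v \in S -> v \in X := subsetP hSX.
have hposN : forall a, dom a = N -> 0 < P1 a := hpos.
have hYO : forall v, v \in Y -> v \in O.
  by move=> v; rewrite /Y in_setD => /andP [].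
clearbody X Y.
have hcase : forall v, (v \in S) -> (v \in X) := hXS.
have eO : O = N :|: Y by sstac X S hY hN hOS hXS.
have eONY : O :\: N = Y by sstac X S hY hN hOS hXS.
have eTS : setT :\: S = O by sstac X S hY hN hOS hXS.
have eX : X = N :|: S by sstac X S hY hN hOS hXS.
have eT : N :|: S :|: Y = setT by sstac X S hY hN hOS hXS.
have eYN : Y :|: N = O by sstac X S hY hN hOS hXS.
have eNYS : N :|: Y :|: S = setT by sstac X S hY hN hOS hXS.
have dNY : [disjoint N & Y] by sstac X S hY hN hOS hXS.
have dYX : [disjoint Y & X] by sstac X S hY hN hOS hXS.
have dYS : [disjoint Y & S] by sstac X S hY hN hOS hXS.
have dNS : [disjoint N & S] by sstac X S hY hN hOS hXS.
have dSO : [disjoint S & O] by sstac X S hY hN hOS hXS.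
have sNO : N \subset O by apply/subsetP => v; rewrite hN hOS => /andP [].
have [o0 ho0] : exists o : pasg D, dom o = O.
  case: (pickP (fun x : pasg D => dom x == O)) => [x /eqP hx|none]; first by exists x.
  case: hP => _ hz hsum; move: hsum; rewrite big1 => [/eqP|x _].
    by rewrite eq_sym oner_eq0.
  by apply: hz; rewrite none.
pose knorm (v : V) := fun _ : pasg D =>
  (#|[pred x : pasg D | dom x == [set v]]|%:R : R)^-1.
have knorm0 : forall v x, 0 <= knorm v x by move=> v x; rewrite invr_ge0 ler0n.
have knormN : forall v (z : pasg D),
    \sum_(x | dom x == [set v]) knorm v (mrg x z) = 1.
  move=> v z; rewrite sumr_const [X in _ *+ X](eq_card (B := [pred x : pasg D | dom x == [set v]])) // -[LHS]mulr_natr mulVf // pnatr_eq0 -lt0n.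
  apply/card_gt0P; exists (restr [set v] (mrg o0 s)).
  by rewrite inE dom_restr dom_merge ho0 hs hcov setIT.
have paG1 : forall v, v \in X -> pa G1 v = pa G v.
  move=> v hv; apply/setP => u; rewrite /pa /= !in_set hv andbT.
  by case e: (E u v) => //=; exact: hXpa e.
have paG2 : forall v, v \in Y -> pa G2 v = pa G v.
  move=> v hv; apply/setP => u; rewrite /pa /= !in_set.
  have hvO := hYO _ hv.
  have hvX : v \notin X by rewrite -hY.
  rewrite hvO (negbTE hvX) andbF /= !andbT.
  case e: (E u v) => //=; by rewrite hOS (hSpa _ _ e).
have paGO : forall v, v \in Y -> v |: pa G v \subset O.
  move=> v hv; apply/subsetP => u; rewrite in_setU1 /pa /= in_set => /orP [/eqP ->|e].
    exact: hYO.
  by rewrite hOS (hSpa _ _ e).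
have paGX : forall v, v \in X -> v |: pa G v \subset X.
  move=> v hv; apply/subsetP => u; rewrite in_setU1 /pa /= in_set => /orP [/eqP ->|e] //.
  exact: hXpa e.
have rG : rnodes G :|: fnodes G = setT by rewrite /= setU0.
have rG1 : rnodes G1 :|: fnodes G1 = X by rewrite /= setU0.
have rG2 : rnodes G2 :|: fnodes G2 = Y :|: N by rewrite /= eONY.
have rnG2 : rnodes G2 = Y by rewrite /= eONY.
have P1off : forall a, dom a != N -> P1 a = 0.
  move=> a ha; rewrite /P1 (marg_off (B := O)) //.
  by move=> x hx; case: hP => _ hz _; exact: hz.
split.
  case=> P0 [[k [k0 kn kz kp]] m0 hPeq].
  move: m0 hPeq; set m := marg S P0 s => m0 hPeq.
  have hm : m != 0 by rewrite (gt_eqF m0).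
  pose prodX z := \prod_(v in X) k v (restr (v |: pa G v) z).
  pose prodY z := \prod_(v in Y) k v (restr (v |: pa G v) z).
  have P0zero : forall x, dom x != setT -> P0 x = 0.
    by move=> x hx; apply: kz; rewrite rG.
  have K0 : forall a y, dom a = N -> dom y = Y ->
      P0 (mrg (mrg a y) s) = prodX (mrg a s) * prodY (mrg y (mrg a s)).
    move=> a y ha hy.
    have -> : mrg (mrg a y) s = mrg y (mrg a s).
      by rewrite (merge_comm (x := a)) ?merge_assoc // ha hy.
    have hdas : dom (mrg a s) = X by rewrite dom_merge ha hs -eX.
    rewrite kp; last by rewrite rG !dom_merge ha hy hs setUC eT.
    rewrite /= (bigID (mem X)) /=; congr (_ * _).
      apply: eq_big => [v|v hv]; first by rewrite in_setT.
      rewrite in_setT andTb in hv.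
      congr (k v _); rewrite -(@restr_restr _ _ (v |: pa G v) X) ?paGX //.
      by rewrite restr_merge_r // hy.
    by apply: eq_big => [v|v hv] //; rewrite in_setT hY.
  have K1 : forall a, dom a = N ->
      \sum_(y | dom y == Y) P0 (mrg (mrg a y) s) = prodX (mrg a s).
    move=> a ha; rewrite (eq_bigr _ (fun y hy => K0 a y ha (eqP hy))) -big_distrr /=.
    rewrite (@sum_prod_cpt _ _ _ E k hdag kn #|Y| Y X) ?mulr1 //.
    - by rewrite dom_merge ha hs -eX.
    - by move=> v u _ _; rewrite in_setU hY; case: (u \in X).
  have hPz : forall x, dom x != O -> P x = 0 by case: hP.
  have hP1 : forall a, dom a = N -> P1 a = prodX (mrg a s) / m.
    move=> a ha; rewrite /P1 (marg_split (B := O)) // -/N eONY.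
    rewrite (eq_bigr (fun y => P0 (mrg (mrg a y) s) / m)); last first.
      by move=> y /eqP hy; rewrite hPeq dom_merge ha hy -eO eqxx.
    by rewrite -mulr_suml K1.
  have hm' : m = \sum_(a | dom a == N) prodX (mrg a s).
    rewrite /m (marg_split (B := setT)) ?subsetT // eTS eO sum_split //.
    apply: eq_bigr => a /eqP ha; rewrite -K1 //; apply: eq_bigr => y /eqP hy.
    by rewrite merge_comm // hs dom_merge ha hy -eO disjoint_sym.
  have prodX0 : forall a, dom a = N -> prodX (mrg a s) != 0.
    move=> a ha; apply/eqP => h0; move: (hposN a ha).
    by rewrite hP1 // h0 mul0r ltxx.
  split.
    exists (fun z => if dom z == X then prodX z else 0).
    have hmX : marg S (fun z => if dom z == X then prodX z else 0) s = m.
      rewrite (marg_split (B := X)) //; last first.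
        by move=> x /negbTE ->.
      rewrite hm'; apply: eq_bigr => a /eqP ha.
      rewrite merge_comm; last by rewrite hs ha disjoint_sym.
      by rewrite dom_merge ha hs -eX eqxx.
    split.
    - exists (fun v => if v \in X then k v else knorm v); split.
      + by move=> v x; case: ifP => _; [exact: k0 | exact: knorm0].
      + move=> v z hz; case: ifP => hv; last exact: knormN.
        by apply: kn; rewrite hz paG1.
      + by move=> z; rewrite rG1 => /negbTE ->.
      + move=> z; rewrite rG1 => ->; rewrite eqxx.
        by apply: eq_bigr => v hv; rewrite hv paG1.
    - by rewrite hmX.
    - move=> a; rewrite hmX; case: (eqVneq (dom a) N) => [ha|ha].
        by rewrite hP1 // dom_merge ha hs -eX eqxx.
      exact: P1off.
  exists (fun v => if v \in Y then k v else knorm v); split.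
  - by move=> v x; case: ifP => _; [exact: k0 | exact: knorm0].
  - move=> v z hz; case: ifP => hv; last exact: knormN.
    by apply: kn; rewrite hz paG2.
  - by move=> z; rewrite rG2 /P2 /condd -/N => /negbTE ->.
  move=> z; rewrite rG2 => hz; rewrite /P2 /condd -/N hz eqxx.
  have hdz : dom z = N :|: Y by rewrite hz setUC.
  have ha : dom (restr N z) = N by rewrite dom_restr hdz setIUr setIid (disjoint_setI0 dNY) setU0.
  have hy : dom (restr Y z) = Y by rewrite dom_restr hdz setIUr setIid (setIC Y N) (disjoint_setI0 dNY) set0U.
  have ez : z = mrg (restr N z) (restr Y z) by rewrite merge_restr.
  move: ha hy ez; set a := restr N z; set y := restr Y z => ha hy ez.
  have -> : marg N P a = P1 a by [].
  rewrite hP1 // hPeq hz eYN eqxx ez K0 //.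
  have -> : prodY (mrg y (mrg a s)) = \prod_(v in rnodes G2)
      (if v \in Y then k v else knorm v) (restr (v |: pa G2 v) (mrg a y)).
    rewrite rnG2; apply: eq_bigr => v hv; rewrite hv paG2 //.
    congr (k v _).
    rewrite -merge_assoc (merge_comm (x := y)); last by rewrite ha hy disjoint_sym.
    rewrite restr_merge_disjR // hs.
    by apply: disjointWl (paGO _ hv) _; rewrite disjoint_sym.
  field; by rewrite hm prodX0.
case=> [[P0' [[k1 [k10 k1n k1z k1p]] m0' hP1eq]] [k2 [k20 k2n k2z k2p]]].
move: m0' hP1eq; set m' := marg S P0' s => m0' hP1eq.
have hm' : m' != 0 by rewrite (gt_eqF m0').
have hPz : forall x, dom x != O -> P x = 0 by case: hP.
pose k v := if v \in X then k1 v else k2 v.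
pose P0 z := if dom z == rnodes G :|: fnodes G then
  \prod_(v in rnodes G) k v (restr (v |: pa G v) z) else 0.
have BN0 : BN G P0.
  exists k; split.
  - by move=> v x; rewrite /k; case: ifP => _; [exact: k10 | exact: k20].
  - move=> v z hz; rewrite /k; case: ifP => hv.
      by apply: k1n; rewrite hz paG1.
    by apply: k2n; rewrite hz paG2 // hY hv.
  - by move=> z hz; rewrite /P0 (negbTE hz).
  - by move=> z hz; rewrite /P0 hz eqxx.
have C0 : forall a, dom a = O -> P0 (mrg a s) = m' * P a.
  move=> a ha.
  have han : dom (restr N a) = N by rewrite dom_restr ha (setIidPl sNO).
  have hd : dom (mrg a s) = rnodes G :|: fnodes G by rewrite rG dom_merge ha hs hcov.
  rewrite /P0 hd eqxx /= (bigID (mem X)) /=.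
  have hXas : restr X (mrg a s) = mrg (restr N a) s.
    apply/ffunP => v; rewrite !restrE !mergeE !restrE hN.
    case: ifP => hvX //=.
      case: (boolP (v \in S)) => hvS /=.
        by rewrite notdomE // ha hOS hvS.
      by case: (a v).
    rewrite notdomE; last by rewrite hs; apply/negP => /hXS; rewrite hvX.
    have : v \in dom a by rewrite ha hOS; apply/negP => /hXS; rewrite hvX.
    by rewrite domE; case: (a v).
  have eXp : \prod_(i in [set: V] | i \in X) k i (restr (i |: pa G i) (mrg a s))
      = P0' (mrg (restr N a) s).
    rewrite k1p; last by rewrite rG1 dom_merge han hs -eX.
    apply: eq_big => [v|v hv]; first by rewrite in_setT.
    rewrite in_setT andTb in hv.
    rewrite /k hv paG1 // -(@restr_restr _ _ (v |: pa G v) X) ?paGX //.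
    by rewrite hXas.
  have eYp : \prod_(i in [set: V] | i \notin X) k i (restr (i |: pa G i) (mrg a s))
      = P2 a.
    rewrite k2p; last by rewrite rG2 eYN.
    rewrite rnG2; apply: eq_big => [v|v hv]; first by rewrite in_setT hY.
    rewrite in_setT andTb in hv.
    rewrite /k (negbTE hv) paG2 ?hY //.
    rewrite restr_merge_disjR // hs.
    by apply: disjointWl (paGO _ _) _; rewrite ?hY // disjoint_sym.
  rewrite eXp eYp.
  have h1 := hP1eq (restr N a); rewrite -/N han eqxx in h1.
  have h2 : P0' (mrg (restr N a) s) = P1 (restr N a) * m'.
    by rewrite h1 divfK.
  have hp1 : P1 (restr N a) != 0 by rewrite (gt_eqF (hposN _ han)).
  rewrite h2 /P2 /condd -/N eYN ha eqxx.
  have -> : marg N P (restr N a) = P1 (restr N a) by [].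
  by field.
have hsumP : \sum_(o | dom o == O) P o = 1.
  case: hP => _ hz hs1; rewrite -hs1 [RHS](bigID (fun o => dom o == O)) /=.
  by rewrite [X in _ = _ + X]big1 ?addr0 // => o /hz.
have hm : marg S P0 s = m'.
  rewrite (marg_split (B := setT)) ?subsetT //; last first.
    by move=> x hx; rewrite /P0 rG (negbTE hx).
  rewrite eTS (eq_bigr (fun o => m' * P o)); last first.
    move=> o /eqP ho; rewrite merge_comm ?C0 //.
    by rewrite hs ho.
  by rewrite -big_distrr /= hsumP mulr1.
exists P0; split => //; first by rewrite hm.
move=> a; rewrite hm; case: (eqVneq (dom a) O) => [ha|ha].
  by rewrite C0 // [m' * _]mulrC mulfK.
exact: hPz.
Qed.
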